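(* Let $\mathcal G$ be a doubly connected molecular graph, and let $\mathcal M_1,\mathcal M_2,\mathcal M_3$ be any three molecules of $\mathcal G$. Construct $\mathcal G_{new}$ from $\mathcal G$ by adding a new molecule $\mathcal M_{new}$, a diffusive edge $b_1$ joining $\mathcal M_{new}$ and $\mathcal M_1$, a blue solid edge $b_2$ joining $\mathcal M_{new}$ and $\mathcal M_2$, and a blue solid edge $b_3$ joining $\mathcal M_{new}$ and $\mathcal M_3$. Then the blue solid edges $b_2$ and $b_3$ are both redundant in $\mathcal G_{new}$.
   Context: A molecular graph is a finite multigraph whose vertices are called molecules and each of whose edges joins two distinct molecules and is either a diffusive edge or a blue solid edge (parallel edges are allowed). A molecular graph is doubly connected if there exist two disjoint sets of edges, $\mathcal B_{black}$ consisting only of diffusive edges and $\mathcal B_{blue}$ consisting only of blue solid or diffusive edges, such that each of $\mathcal B_{black}$ and $\mathcal B_{blue}$ contains a spanning tree of the set of all molecules. A blue solid edge $e$ of a doubly connected graph is redundant if the graph obtained by deleting $e$ is still doubly connected. *)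

(* Defs.v *)
From mathcomp Require Import all_boot.
Set Implicit Arguments. Unset Strict Implicit. Unset Printing Implicit Defensive.

(* A molecular graph: molecules V (finType), edges E (finType), each edge e
   joins src e and dst e; dif e = true means e is a diffusive edge,
   dif e = false means e is a blue solid edge.  Parallel edges allowed. *)

Section MolGraph.
Variables (V E : finType) (src dst : E -> V) (dif : E -> bool).

Definition molecular_graph : Prop := forall e, src e != dst e.

Definition adj (B : {set E}) : rel V :=
  fun x y => [exists e in B, ((src e == x) && (dst e == y)) ||
                             ((src e == y) && (dst e == x))].

Definition spans_connected (B : {set E}) : Prop :=
  forall x y : V, connect (adj B) x y.

Definition spanning_tree (T : {set E}) : Prop :=
  spans_connected T /\ #|T|.+1 = #|V|.

Definition contains_spanning_tree (B : {set E}) : Prop :=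
  exists2 T : {set E}, T \subset B & spanning_tree T.

Definition doubly_connected_on (A : {set E}) : Prop :=
  exists Bblack Bblue : {set E},
    [/\ Bblack \subset A, Bblue \subset A, [disjoint Bblack & Bblue],
        (forall e, e \in Bblack -> dif e) &
        (contains_spanning_tree Bblack /\ contains_spanning_tree Bblue)].

Definition doubly_connected : Prop := doubly_connected_on [set: E].

Definition redundant (e : E) : Prop :=
  [/\ doubly_connected, dif e = false & doubly_connected_on [set~ e]].

End MolGraph.

(* The graph G_new: molecules option V (None = M_new), edges E + 'I_3,
   where inr 0 = b1 (diffusive, M_new -- M1), inr 1 = b2 (blue solid,
   M_new -- M2), inr 2 = b3 (blue solid, M_new -- M3). *)
Section NewGraph.
Variables (V E : finType) (src dst : E -> V) (dif : E -> bool) (M1 M2 M3 : V).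

Definition new_src (e : E + 'I_3) : option V :=
  match e with inl e' => Some (src e') | inr _ => None end.

Definition new_dst (e : E + 'I_3) : option V :=
  match e with
  | inl e' => Some (dst e')
  | inr i => if val i == 0 then Some M1 else if val i == 1 then Some M2 else Some M3
  end.

Definition new_dif (e : E + 'I_3) : bool :=
  match e with inl e' => dif e' | inr i => val i == 0 end.

End NewGraph.

Definition b1 {E : finType} : E + 'I_3 := inr (@Ordinal 3 0 isT).
Definition b2 {E : finType} : E + 'I_3 := inr (@Ordinal 3 1 isT).
Definition b3 {E : finType} : E + 'I_3 := inr (@Ordinal 3 2 isT).

(* Main.v *)
Require Import Defs.
From mathcomp Require Import all_boot.

Section Aux.
Variables (V E : finType) (src dst : E -> V) (dif : E -> bool) (M1 M2 M3 : V).

Let nsrc := new_src src.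
Let ndst := new_dst dst M1 M2 M3.

Lemma inl_inj' : injective (@inl E 'I_3).
Proof. by move=> a b [->]. Qed.

Lemma inr_notin (A : {set E}) (i : 'I_3) : (inr i \in [set inl x | x in A]) = false.
Proof. by apply/imsetP => -[]. Qed.

Lemma lift_connect (T : {set E}) (T' : {set E + 'I_3}) x y :
  [set inl x | x in T] \subset T' ->
  connect (adj src dst T) x y -> connect (adj nsrc ndst T') (Some x) (Some y).
Proof.
move=> sub /connectP [p Hp ->] {y}.
elim: p x Hp => [|z p IH] x /=; first by rewrite connect0.
case/andP=> Hxz Hp; apply: connect_trans (IH _ Hp).
apply: connect1; case/existsP: Hxz => e /andP [He Hxz].
apply/existsP; exists (inl e); rewrite (subsetP sub) ?mem_imset //; exact: inl_inj'.
Qed.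

Lemma new_tree (T : {set E}) (i : 'I_3) M :
  ndst (inr i) = Some M ->
  spanning_tree src dst T ->
  spanning_tree nsrc ndst ([set inl x | x in T] :|: [set inr i]).
Proof.
move=> HM [Hc Hcard]; split.
  have sub : [set inl x | x in T] \subset [set inl x | x in T] :|: [set inr i].
    exact: subsetUl.
  have HN : adj nsrc ndst ([set inl x | x in T] :|: [set inr i]) None (Some M).
    apply/existsP; exists (inr i); rewrite !inE eqxx orbT /=.
    by rewrite /nsrc /= -HM eqxx.
  have HN' : adj nsrc ndst ([set inl x | x in T] :|: [set inr i]) (Some M) None.
    apply/existsP; exists (inr i); rewrite !inE eqxx orbT /=.
    rewrite /nsrc /ndst /= in HM *; rewrite HM.
    exact: eqxx.
  move=> [x|] [y|].
  - exact: lift_connect sub (Hc _ _).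
  - apply: connect_trans (connect1 HN'); exact: lift_connect sub (Hc _ _).
  - apply: connect_trans (connect1 HN) _; exact: lift_connect sub (Hc _ _).
  - exact: connect0.
rewrite setUC cardsU1 inr_notin card_imset; last exact: inl_inj'.
by rewrite card_option -Hcard.
Qed.

End Aux.

Theorem claimA6 (V E : finType) (src dst : E -> V) (dif : E -> bool)
    (M1 M2 M3 : V) :
  molecular_graph src dst ->
  doubly_connected src dst dif ->
  redundant (new_src src) (new_dst dst M1 M2 M3) (new_dif dif) b2 /\
  redundant (new_src src) (new_dst dst M1 M2 M3) (new_dif dif) b3.
Proof.
move=> _ [Bk [Bu [_ _ Hdis Hdif [[Tk sTk HTk] [Tu sTu HTu]]]]].
have gen : forall (j k : 'I_3) M, val j != 0 -> val k != 0 -> j != k ->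
  new_dst dst M1 M2 M3 (inr j) = Some M ->
  doubly_connected_on (new_src src) (new_dst dst M1 M2 M3) (new_dif dif) [set~ inr k].
  move=> j k M j0 k0 jk HM.
  exists ([set inl x | x in Bk] :|: [set b1]), ([set inl x | x in Bu] :|: [set inr j]).
  split.
  - apply/subsetP => -[e|i]; rewrite !inE ?inr_notin ?mem_imset //=; try exact: inl_inj'.
    by move/eqP=> -> /=; apply/eqP => -[] /(congr1 val) /= /esym; apply/eqP.
  - apply/subsetP => -[e|i]; rewrite !inE ?inr_notin ?mem_imset //=; try exact: inl_inj'.
    by move/eqP=> ->; apply/eqP => -[] /esym; apply/eqP; rewrite eq_sym.
  - rewrite -setI_eq0; apply/eqP/setP => -[e|i]; rewrite !inE ?inr_notin ?mem_imset //=;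
      try exact: inl_inj'.
    rewrite -[inl e == b1]/false -[inl e == inr j]/false !orbF.
    case He: (e \in Bk) => //=; exact: (disjointFr Hdis He).
    apply/negP => /andP [/eqP -> /eqP [] /(congr1 val) /= Hj].
    exact: (negP j0 (introT eqP (esym Hj))).
  - move=> -[e|i]; rewrite !inE ?inr_notin ?mem_imset //=; try exact: inl_inj'.
      rewrite -[inl e == b1]/false orbF; exact: Hdif.
  - split.
      exists ([set inl x | x in Tk] :|: [set b1]).
        by apply: setSU; apply: imsetS.
      exact: (@new_tree V E src dst M1 M2 M3 Tk (Ordinal (isT : 0 < 3)) M1 erefl HTk).
    exists ([set inl x | x in Tu] :|: [set inr j]).
      by apply: setSU; apply: imsetS.
    exact: (@new_tree V E src dst M1 M2 M3 Tu j M HM HTu).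
have gen2 : forall (j k : 'I_3) M, val j != 0 -> val k != 0 -> j != k ->
  new_dst dst M1 M2 M3 (inr j) = Some M ->
  redundant (new_src src) (new_dst dst M1 M2 M3) (new_dif dif) (inr k).
  move=> j k M j0 k0 jk HM; split => //.
  - have := gen j k M j0 k0 jk HM.
    move=> [A [B [sA sB H1 H2 H3]]]; exists A, B; split; rewrite ?subsetT //.
  - by rewrite /= (negbTE k0).
  - exact: gen j k M j0 k0 jk HM.
split.
- by apply: (gen2 (@Ordinal 3 2 isT) (@Ordinal 3 1 isT) M3).
- by apply: (gen2 (@Ordinal 3 1 isT) (@Ordinal 3 2 isT) M2).
Qed.
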